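(* Let $k$ be an even positive integer, let $A,B$ be finite subsets of an abelian group, and let $C\subseteq A+B$. Let $\Gamma_C$ be the bipartite graph with vertex classes $A$ and $B$ (taken as disjoint copies) in which $a\in A$ and $b\in B$ are adjacent if and only if $a+b\in C$. Suppose that for every pair $(b,b')\in B\times B$ there are at least $w>0$ walks of length $k$ in $\Gamma_C$ from $b$ to $b'$. Then $|B-B|\le |C|^k/w$.
   Context: For subsets $X,Y$ of an abelian group, $X+Y=\{x+y:x\in X,y\in Y\}$ and $X-Y=\{x-y:x\in X,y\in Y\}$. A walk of length $k$ is a sequence of $k+1$ vertices with consecutive vertices adjacent. *)

(* Defs.v *)
From HB Require Import structures.
From mathcomp Require Import all_boot all_order all_algebra.
From mathcomp Require Import finmap.
Set Implicit Arguments. Unset Strict Implicit. Unset Printing Implicit Defensive.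
Import Order.TTheory GRing.Theory Num.Theory.
Local Open Scope fset_scope.
Local Open Scope ring_scope.

Definition sumset (G : zmodType) (A B : {fset G}) : {fset G} :=
  [fset a + b | a in A, b in B].
Definition diffset (G : zmodType) (A B : {fset G}) : {fset G} :=
  [fset a - b | a in A, b in B].

(* Vertices of Gamma_C: disjoint copies of A (inl) and B (inr). *)
Definition gvert (G : zmodType) (A B : {fset G}) : finType := (A + B)%type.

Definition gadj (G : zmodType) (A B C : {fset G}) (u v : gvert A B) : bool :=
  match u, v with
  | inl a, inr b => (val a + val b) \in C
  | inr b, inl a => (val a + val b) \in C
  | _, _ => false
  end.

Definition is_walk (G : zmodType) (A B C : {fset G}) (k : nat)
  (w : k.+1.-tuple (gvert A B)) : bool :=
  path (@gadj G A B C) (thead w) (behead w).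

Definition nwalks (G : zmodType) (A B C : {fset G}) (k : nat)
  (u v : gvert A B) : nat :=
  #|[set w : k.+1.-tuple (gvert A B) |
      [&& @is_walk G A B C k w, thead w == u & last (thead w) (behead w) == v]]|.
Arguments nwalks {G} A B C k u v.

(* Main.v *)
Require Import Defs.
From HB Require Import structures.
From mathcomp Require Import all_boot all_order all_algebra.
From mathcomp Require Import finmap.
Import Order.TTheory GRing.Theory Num.Theory.
Local Open Scope fset_scope.
Local Open Scope ring_scope.

Section W.
Variables (G : zmodType) (A B C : {fset G}).
Local Notation V := (gvert A B).

Definition eG (u v : V) : G :=
  match u, v with
  | inl a, inr b => val a + val b
  | inr b, inl a => val a + val b
  | _, _ => 0
  end.

Definition Rd (d : G) (x y : V) : Prop :=
  match x, y with
  | inr b, inr b' => val b - val b' = d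
  | inl a, inl a' => val a - val a' = - d
  | _, _ => False
  end.

Lemma adj_inC (u v : V) : gadj C u v -> eG u v \in C.
Proof. by case: u => [a|b]; case: v => [a'|b']. Qed.

Lemma path_inC (x : V) s : path (gadj C) x s -> all (fun g => g \in C) (pairmap eG x s).
Proof.
elim: s x => [|y s IH] x //= /andP[hxy hp]; rewrite adj_inC //=; exact: IH.
Qed.

Lemma stepR d (x x' y y' : V) : Rd d x x' -> gadj C x y -> gadj C x' y' ->
  eG x y = eG x' y' -> Rd d y y'.
Proof.
case: x => [a|b]; case: x' => [a'|b'] //=; case: y => [c|c] //; case: y' => [c'|c'] //= hR _ _ he.
- rewrite -(opprK d) -hR opprB; apply/eqP; rewrite subr_eq addrAC -he.
  by rewrite (addrC (val a)) addrK.
- rewrite -hR opprB; apply/eqP; rewrite subr_eq addrAC (addrC (val b')) -he.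
  by rewrite addrK.
Qed.

Lemma walkR d (x x' : V) s s' : path (gadj C) x s -> path (gadj C) x' s' ->
  pairmap eG x s = pairmap eG x' s' -> Rd d x x' -> Rd d (last x s) (last x' s').
Proof.
elim: s s' x x' => [|y s IH] [|y' s'] x x' //= /andP[h1 p1] /andP[h2 p2] [he hs] hR.
apply: IH => //; exact: stepR hR h1 h2 he.
Qed.

Lemma adj_inj (x y y' : V) : gadj C x y -> gadj C x y' -> eG x y = eG x y' -> y = y'.
Proof.
case: x => [a|b]; case: y => [c|c] //; case: y' => [c'|c'] //= _ _ he.
  by congr inr; apply: val_inj; apply: (addrI (val a)).
by congr inl; apply: val_inj; apply: (addIr (val b)).
Qed.

Lemma walkEq (x : V) s s' : path (gadj C) x s -> path (gadj C) x s' ->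
  pairmap eG x s = pairmap eG x s' -> s = s'.
Proof.
elim: s s' x => [|y s IH] [|y' s'] x //= /andP[h1 p1] /andP[h2 p2] [he hs].
have eyy : y = y' := @adj_inj x y y' h1 h2 he.
subst y'; congr (_ :: _); exact: IH p1 p2 hs.
Qed.
End W.

Arguments eG {G A B}.
Arguments Rd {G A B}.

Lemma tval_eta n (T : Type) (t : n.+1.-tuple T) : tval t = thead t :: behead t.
Proof. by rewrite {1}(tuple_eta t). Qed.

Lemma diff_aux (G : zmodType) (x y z t : G) : y - t = x - z -> x - y = z - t.
Proof.
move=> h; apply/eqP; rewrite subr_eq; apply/eqP.
rewrite -[x](subrK z) -h.
by rewrite addrAC [RHS]addrAC (addrC z).
Qed.

Theorem lemma2p2 (G : zmodType) (k : nat) (A B C : {fset G}) (w : nat) :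
  (0 < k)%N -> ~~ odd k ->
  C `<=` sumset A B ->
  (0 < w)%N ->
  (forall b b' : B, (w <= nwalks A B C k (inr b) (inr b'))%N) ->
  (#|` diffset B B|%:R : rat) <= (#|` C| ^ k)%:R / w%:R.
Proof.
move=> k0 _ _ w0 hw.
set D := diffset B B.
have repP : forall d : D, exists bb : B * B, val d == val bb.1 - val bb.2.
  move=> d; move: (fsvalP d) => /imfset2P [x xB [y yB e]].
  by exists ([` xB], [` yB]); rewrite /= e.
pose rep d := xchoose (repP d).
have repE d : val d = val (rep d).1 - val (rep d).2 by apply/eqP; exact: (xchooseP (repP d)).
pose T := (k.+1.-tuple (gvert A B))%type.
pose inW (d : D) (t : T) := [&& is_walk C t, thead t == inr (rep d).1
   & last (thead t) (behead t) == inr (rep d).2].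
pose S := [set p : D * T | inW p.1 p.2].
have cardS : #|S| = (\sum_(d : D) nwalks A B C k (inr (rep d).1) (inr (rep d).2))%N.
  symmetry; rewrite (eq_bigr (fun d => \sum_(t : T) (if (d,t) \in S then 1 else 0))%N); last first.
    move=> d _; rewrite /nwalks -sum1_card big_mkcond; apply: eq_bigr => t _.
    by rewrite !inE.
  rewrite pair_big -sum1_card [RHS]big_mkcond /=; apply: eq_bigr => -[d t] _ //.
have lowS : (#|` D| * w <= #|S|)%N.
  have -> : (#|` D| * w = \sum_(d : D) w)%N by rewrite sum_nat_const cardfE.
  rewrite cardS; apply: leq_sum => d _; exact: hw.
have upS : (#|S| <= #|` C| ^ k)%N.
  case: (set_0Vmem S) => [->|[p0 p0S]]; first by rewrite cards0.
  have edC : forall t : T, is_walk C t ->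
      all (fun g => g \in C) (pairmap eG (thead t) (behead t)).
    by move=> t; apply: path_inC.
  have szE : forall t : T, size (pairmap eG (thead t) (behead t)) = k.
    by move=> t; rewrite size_pairmap size_behead size_tuple.
  have c0C : nth 0 (pairmap eG (thead p0.2) (behead p0.2)) 0 \in C.
    move: p0S; rewrite inE => /and3P[wt _ _].
    by apply: (allP (edC _ wt)); rewrite mem_nth // szE.
  pose c0 : C := [` c0C].
  pose F (t : T) : {ffun 'I_k -> C} :=
    [ffun i : 'I_k => insubd c0 (nth 0 (pairmap eG (thead t) (behead t)) i)].
  rewrite -(@card_in_imset _ _ (fun p => F p.2) S); last first.
    move=> [d t] [d' t']; rewrite !inE /= => /and3P[wt ht lt] /and3P[wt' ht' lt'] eF.
    have ee : pairmap eG (thead t) (behead t) = pairmap eG (thead t') (behead t').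
      apply: (@eq_from_nth _ 0); first by rewrite !szE.
      move=> i; rewrite szE => ik.
      have := congr1 (fun f : {ffun 'I_k -> C} => val (f (Ordinal ik))) eF; rewrite /= !ffunE !insubdK //.
        by apply: (allP (edC _ wt')); rewrite mem_nth // szE.
      by apply: (allP (edC _ wt)); rewrite mem_nth // szE.
    have hR := @walkR G A B C (val (rep d).1 - val (rep d').1) _ _ _ _ wt wt' ee.
    move: hR; rewrite (eqP lt) (eqP lt') (eqP ht) (eqP ht') /= => hR.
    have hR' := hR erefl.
    have dd : d = d'.
      by apply: val_inj; rewrite !repE; apply: diff_aux.
    subst d'.
    rewrite /is_walk (eqP ht) -(eqP ht') in wt ee.
    have eb := @walkEq G A B C _ _ _ wt wt' ee.
    congr (_, _); apply: val_inj; change (tval t = tval t'); rewrite (@tval_eta _ _ t) (@tval_eta _ _ t') (eqP ht) (eqP ht') eb //.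
  rewrite cardfE -[X in (_ <= _ ^ X)%N](card_ord k) -card_ffun.
  exact: max_card.
rewrite ler_pdivlMr ?ltr0n // -natrM ler_nat.
exact: leq_trans lowS upS.
Qed.
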